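(* Let $p\ge2$ be an integer, $A_0\in GL_{n_1}(\mathbb{C})$ and $B_0\in GL_{n_2}(\mathbb{C})$. If $T\in\mathcal{M}_{n_2,n_1}(\mathbb{C}((z)))$ satisfies $\phi_p(T)A_0=B_0T$, then $T\in\mathcal{M}_{n_2,n_1}(\mathbb{C})$.
   Context: $\mathbb{C}((z))$ is the field of formal Laurent series and $\phi_p$ acts entrywise by $f(z)\mapsto f(z^p)$. *)

(* Defs.v *)
From HB Require Import structures.
From mathcomp Require Import all_boot all_order all_algebra.
From mathcomp Require Import complex.
From mathcomp Require Import Rstruct.
Set Implicit Arguments. Unset Strict Implicit. Unset Printing Implicit Defensive.
Import Order.TTheory GRing.Theory Num.Theory.
Local Open Scope ring_scope.

Definition CC : Type := (Rdefinitions.R)[i].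

(* A formal Laurent series over C is given by its coefficient function
   k |-> coefficient of z^k, whose support is bounded below. *)
Definition is_laurent (f : int -> CC) : Prop :=
  exists N : int, forall k : int, k < N -> f k = 0.

(* phi_p : f(z) |-> f(z^p) on coefficient functions:
   coefficient of z^k in f(z^p) is f_{k/p} if p | k, and 0 otherwise. *)
Definition phi_series (p : nat) (f : int -> CC) : int -> CC :=
  fun k => if (p%:Z %| k)%Z then f (k %/ p%:Z)%Z else 0.

Definition phi_mx (p : nat) {m n : nat} (T : 'M[int -> CC]_(m, n))
  : 'M[int -> CC]_(m, n) := map_mx (phi_series p) T.

Definition mx_mul_const {m n r : nat} (T : 'M[int -> CC]_(m, n))
  (A : 'M[CC]_(n, r)) : 'M[int -> CC]_(m, r) :=
  \matrix_(i, j) (fun d : int => \sum_(k < n) T i k d * A k j).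

Definition const_mul_mx {m n r : nat} (B : 'M[CC]_(m, n))
  (T : 'M[int -> CC]_(n, r)) : 'M[int -> CC]_(m, r) :=
  \matrix_(i, j) (fun d : int => \sum_(k < n) B i k * T k j d).

Definition is_const_mx {m n : nat} (T : 'M[int -> CC]_(m, n)) : Prop :=
  forall i j (d : int), d != 0 -> T i j d = 0.

(* Main.v *)
Require Import Defs.
From HB Require Import structures.
From mathcomp Require Import all_boot all_order all_algebra.
From mathcomp Require Import complex.
From mathcomp Require Import Rstruct.
From mathcomp Require Import zify.
Import Order.TTheory GRing.Theory Num.Theory.
Local Open Scope ring_scope.

Lemma common_bound (I : finType) (P : I -> int -> Prop) :
  (forall i, exists N : int, forall k, k < N -> P i k) ->
  exists N : int, forall i k, k < N -> P i k.
Proof.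
move=> H.
suff: forall s : seq I, exists N : int, forall i k, i \in s -> k < N -> P i k.
  case/(_ (enum I)) => N HN; exists N => i k; apply: HN; by rewrite mem_enum.
elim=> [|x s [Ns HNs]]; first by exists 0.
have [Nx HNx] := H x.
exists (Num.min Nx Ns) => i k; rewrite inE => /orP [/eqP->|ins] hk.
  apply: HNx; apply: lt_le_trans hk _; by rewrite ge_min lexx.
apply: HNs => //; apply: lt_le_trans hk _; by rewrite ge_min lexx orbT.
Qed.

Lemma L1 (p : nat) (e d : int) : (2 <= p)%N -> 0 < d -> e * p%:Z = d -> 0 < e /\ (`|e| < `|d|)%N.
Proof. move=> *; split; nia. Qed.
Lemma L2 (p : nat) (e N : int) (m : nat) : (2 <= p)%N -> e < 0 -> e < N + (m.+1)%:Z -> p%:Z * e < N + m%:Z.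
Proof. move=> *; nia. Qed.
Lemma L3 (d N : int) : d < 0 -> d < N + (`|d - N|%N.+1)%:Z.
Proof. move=> *; lia. Qed.
Lemma L4 (e N : int) : e < N + (0%N)%:Z -> e < N.
Proof. move=> *; lia. Qed.
Lemma L5 (d : int) : d != 0 -> ~~ (d < 0) -> 0 < d.
Proof. move=> *; lia. Qed.
Lemma L6 (p : nat) (e : int) : (2 <= p)%N -> e < 0 -> p%:Z * e < 0.
Proof. move=> *; nia. Qed.

Theorem mainTheorem14 (p n1 n2 : nat) (A0 : 'M[CC]_n1) (B0 : 'M[CC]_n2)
  (T : 'M[int -> CC]_(n2, n1)) :
  (2 <= p)%N ->
  A0 \in unitmx -> B0 \in unitmx ->
  (forall i j, is_laurent (T i j)) ->
  mx_mul_const (phi_mx p T) A0 = const_mul_mx B0 T ->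
  is_const_mx T.
Proof.
move=> p2 uA uB HL H.
pose Tm (d : int) : 'M[CC]_(n2, n1) := \matrix_(i, j) T i j d.
pose Pm (d : int) : 'M[CC]_(n2, n1) := \matrix_(i, j) phi_series p (T i j) d.
have key d : Pm d *m A0 = B0 *m Tm d.
  apply/matrixP=> i j.
  transitivity ((mx_mul_const (phi_mx p T) A0) i j d).
    by rewrite !mxE; apply: eq_bigr => k _; rewrite !mxE.
  by rewrite H !mxE; apply: eq_bigr => k _; rewrite !mxE.
have pnz : (p%:Z != 0) by case: (p) p2.
have Pdiv e : Pm (p%:Z * e) = Tm e.
  apply/matrixP=> i j; rewrite !mxE /phi_series.
  by rewrite dvdz_mulr ?dvdzz // mulKz.
have Pndiv d : ~~ (p%:Z %| d)%Z -> Pm d = 0.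
  move=> nd; apply/matrixP=> i j; rewrite !mxE /phi_series.
  by rewrite (negbTE nd).
have cancelB M : B0 *m M = 0 -> M = 0.
  by move=> h; rewrite -(mulKmx uB M) h mulmx0.
have cancelA M : M *m A0 = 0 -> M = 0.
  by move=> h; rewrite -(mulmxK uA M) h mul0mx.
have pos : forall m : nat, forall d : int, 0 < d -> (`|d|%N <= m)%N -> Tm d = 0.
  elim=> [|m IH] d dpos hd.
    by move: hd; rewrite leqn0 absz_eq0 => /eqP d0; move: dpos; rewrite d0 ltxx.
  have [dv|nd] := boolP (p%:Z %| d)%Z; last by apply: cancelB; rewrite -key Pndiv // mul0mx.
  have de := divzK dv; set e := (d %/ p%:Z)%Z in de.
  have [epos ele'] := @L1 p e d p2 dpos de.
  have ele : (`|e|%N <= m)%N by rewrite -ltnS; exact: leq_trans ele' hd.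
  apply: cancelB; rewrite -key -de mulrC Pdiv IH //. by rewrite mul0mx.
have [N HN] : exists N : int, forall d, d < N -> Tm d = 0.
  have [N HN] := @common_bound _ (fun x : 'I_n2 * 'I_n1 => fun k => T x.1 x.2 k = 0)
    (fun x => HL x.1 x.2).
  exists N => d hd; apply/matrixP => i j; rewrite !mxE; exact: (HN (i, j)).
have neg : forall m : nat, forall e : int, e < 0 -> e < N + m%:Z -> Tm e = 0.
  elim=> [|m IH] e eneg he; first by apply: HN; exact: L4.
  apply: cancelA; rewrite -Pdiv key IH ?mulmx0 //; [exact: L6 | exact: L2].
move=> i j d dnz.
have : Tm d = 0.
  have [dneg|dpos] := ltP d 0.
    apply: (neg (`|d - N|%N.+1)) => //; exact: L3.
  apply: (pos `|d|%N) => //; by rewrite lt_def dnz dpos.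
by move/matrixP/(_ i j); rewrite !mxE.
Qed.
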